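(* For any graph $G$, $\chi_c(G,\pm)=2\chi_c(G)$.
   Context: Graphs are finite, may have multiple edges, no loops. A signed graph $(G,\sigma)$ is a graph $G$ with a signature $\sigma:E(G)\to\{+1,-1\}$. The digon graph $(G,\pm)$ has vertex set $V(G)$ and, for each pair $\{u,v\}$ forming an edge of $G$, both a positive edge $uv$ and a negative edge $uv$. For real $r\ge 2$, $C^r$ is the circle of circumference $r$, $d_{C^r}(x,y)=\min\{|x-y|,r-|x-y|\}$, $\overline{x}=x+r/2\pmod r$. A circular $r$-coloring of a signed graph is $f:V\to C^r$ with $d_{C^r}(f(u),f(v))\ge1$ for each positive edge $uv$ and $d_{C^r}(f(u),\overline{f(v)})\ge1$ for each negative edge $uv$; the signed circular chromatic number $\chi_c(G,\sigma)$ is the infimum of such $r\ge2$. For the unsigned graph $G$, a circular $r$-coloring requires $d_{C^r}(f(u),f(v))\ge1$ for every edge, and $\chi_c(G)$ is the infimum of such $r$. *)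

(* Defs.v *)
From mathcomp Require Import all_boot all_order all_algebra.
From mathcomp Require Import boolp classical_sets reals.
Set Implicit Arguments. Unset Strict Implicit. Unset Printing Implicit Defensive.
Import Order.TTheory GRing.Theory Num.Theory.
Local Open Scope ring_scope.
Local Open Scope classical_set_scope.

Definition loopless (V E : finType) (ends : E -> V * V) : Prop :=
  forall e, (ends e).1 != (ends e).2.

Section Circ.
Variable R : realType.

(* distance on the circle C^r (points represented by reals in [0, r)) *)
Definition dC (r x y : R) : R := Num.min `|x - y| (r - `|x - y|).

Definition antip (r x : R) : R := if x + r / 2 < r then x + r / 2 else x + r / 2 - r.

Definition on_circle (r : R) (V : finType) (f : V -> R) : Prop :=
  forall v, 0 <= f v /\ f v < r.

(* circular r-coloring of the signed graph (V, E, ends, sigma);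
   sigma e = true means positive edge, false means negative edge *)
Definition signed_circ_coloring (V E : finType) (ends : E -> V * V)
  (sigma : E -> bool) (r : R) (f : V -> R) : Prop :=
  on_circle r f /\
  forall e, if sigma e then 1 <= dC r (f (ends e).1) (f (ends e).2)
            else 1 <= dC r (f (ends e).1) (antip r (f (ends e).2)).

Definition signed_chi_c (V E : finType) (ends : E -> V * V) (sigma : E -> bool) : R :=
  inf [set r : R | 2 <= r /\ exists f : V -> R, signed_circ_coloring ends sigma r f].

Definition circ_coloring (V E : finType) (ends : E -> V * V) (r : R) (f : V -> R) : Prop :=
  on_circle r f /\ forall e, 1 <= dC r (f (ends e).1) (f (ends e).2).

Definition chi_c (V E : finType) (ends : E -> V * V) : R :=
  inf [set r : R | 1 <= r /\ exists f : V -> R, circ_coloring ends r f].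

End Circ.

(* The digon graph (G, ±): for every edge of G, one positive and one negative copy.
   Edge type E * bool; the copy (e, true) is positive, (e, false) negative. *)
Definition digon_ends (V E : finType) (ends : E -> V * V) : (E * bool)%type -> V * V :=
  fun p => ends p.1.
Definition digon_sign (E : finType) : (E * bool)%type -> bool := fun p => p.2.

(* Main.v *)
Require Import Defs.
From mathcomp Require Import all_boot all_order all_algebra.
From mathcomp Require Import boolp classical_sets reals.
From mathcomp Require Import lra.
Import Order.TTheory GRing.Theory Num.Theory.
Local Open Scope ring_scope.

Lemma dC_ge1 (R : realType) (r x y : R) :
  (1 <= dC r x y) <-> ((1 <= x - y /\ x - y <= r - 1) \/ (x - y <= -1 /\ y - x <= r - 1)).
Proof.
rewrite /dC le_min.
have [h|h] := lerP 0 (x - y).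
- rewrite ger0_norm //; split.
  + by move/andP=> [a b]; left; split; lra.
  + move=> [[a b]|[a b]]; apply/andP; split; lra.
- rewrite ltr0_norm //; split.
  + by move/andP=> [a b]; right; split; lra.
  + move=> [[a b]|[a b]]; apply/andP; split; lra.
Qed.

Lemma L1 (R : realType) (V E : finType) (ends : E -> V * V) (r : R) (f : V -> R) :
  1 <= r -> circ_coloring ends r f ->
  signed_circ_coloring (digon_ends ends) (@digon_sign E) (2 * r) f.
Proof.
move=> r1 [Hon He]; split.
  by move=> v; have [a b] := Hon v; split; lra.
move=> [e b]; rewrite /digon_sign /digon_ends /=.
have /dC_ge1 H := He e.
have [a1 b1] := Hon (ends e).1; have [a2 b2] := Hon (ends e).2.
case: b; apply/dC_ge1; first lra.
rewrite /antip; case: ifP => _; lra.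
Qed.

Lemma L2 (R : realType) (V E : finType) (ends : E -> V * V) (s : R) (g : V -> R) :
  2 <= s -> signed_circ_coloring (digon_ends ends) (@digon_sign E) s g ->
  circ_coloring ends (s / 2) (fun v => if g v < s / 2 then g v else g v - s / 2).
Proof.
move=> s2 [Hon He]; split.
  by move=> v; have [a b] := Hon v; case: ifP => h; split; lra.
move=> e.
have /dC_ge1 H1 := He (e, true).
have /dC_ge1 H2 := He (e, false).
rewrite /digon_sign /digon_ends /antip /= in H1 H2.
have [a1 b1] := Hon (ends e).1; have [a2 b2] := Hon (ends e).2.
apply/dC_ge1.
move: H2; case: ifP => h2 H2; case: ifP => h3; case: ifP => h4; lra.
Qed.

Lemma nonempty_u (R : realType) (V E : finType) (ends : E -> V * V) :
  loopless ends ->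
  exists r : R, 1 <= r /\ exists f : V -> R, circ_coloring ends r f.
Proof.
move=> Hl.
exists (#|V|%:R + 1); split; first by have := ler0n R #|V|; lra.
exists (fun v => (enum_rank v : nat)%:R); split.
  move=> v; split; first exact: ler0n.
  have := ltn_ord (enum_rank v); rewrite -(ltr_nat R) => h; lra.
move=> e; apply/dC_ge1.
have hne : (enum_rank (ends e).1 : nat) != enum_rank (ends e).2.
  by apply: contra (Hl e) => /eqP /val_inj /enum_rank_inj ->.
have h1 := ltn_ord (enum_rank (ends e).1).
have h2 := ltn_ord (enum_rank (ends e).2).
move: (enum_rank (ends e).1 : nat) (enum_rank (ends e).2 : nat) hne h1 h2 => i j hne h1 h2.
rewrite -(ltr_nat R) in h1; rewrite -(ltr_nat R) in h2.
have := ler0n R i; have := ler0n R j => j0 i0.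
have [hij|hij] : (i < j)%N \/ (j < i)%N.
  by case: ltngtP hne => // _; [left|right].
- rewrite -(ler_nat R) -natr1 in hij; right; split; lra.
- rewrite -(ler_nat R) -natr1 in hij; left; split; lra.
Qed.

Theorem lemma6 (R : realType) (V E : finType) (ends : E -> V * V)
  (Hloop : loopless ends) :
  signed_chi_c R (digon_ends ends) (@digon_sign E) = 2 * chi_c R ends.
Proof.
rewrite /signed_chi_c /chi_c.
set Su := [set r : R | 1 <= r /\ exists f : V -> R, circ_coloring ends r f]%classic.
set Ss := [set r : R | 2 <= r /\ exists f : V -> R,
   signed_circ_coloring (digon_ends ends) (@digon_sign E) r f]%classic.
have nSu : nonempty Su by exact: nonempty_u.
have H1 : forall r, Su r -> Ss (2 * r).
  move=> r [r1 [f Hf]]; split; first lra.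
  by exists f; apply: L1.
have H2 : forall s, Ss s -> Su (s / 2).
  move=> s [s2 [g Hg]]; split; first lra.
  by eexists; apply: L2 Hg.
have nSs : nonempty Ss by case: nSu => r /H1 h; exists (2 * r).
have lbu : has_lbound Su by exists 1 => y [].
have lbs : has_lbound Ss by exists 2 => y [].
apply/eqP; rewrite eq_le; apply/andP; split.
- suff : inf Ss / 2 <= inf Su by lra.
  apply: lb_le_inf nSu _ => r /H1 h.
  have := ge_inf lbs h; lra.
- apply: lb_le_inf nSs _ => s /H2 h.
  have := ge_inf lbu h; lra.
Qed.
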